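(* Let $k\ge1$, $a_i,b_i,c_i\in\mathbb{C}$ ($1\le i\le k$) with $\prod_{j=1}^kc_j\neq0$ and $\prod_{j=1}^kb_j\neq0$, let $T(f)$ be the tridiagonal $k$-Toeplitz operator on $\ell^2(\mathbb{N})$ with symbol $f$, and let $\lambda\in\mathbb{C}\setminus\sigma_{ess}(T(f))$. If $\sum_{j=1}^k\operatorname{wind}(\lambda_j(\mathbb{T}),\lambda)<0$, then there exist an eigenvector $\mathbf{x}\in\ell^2$ of $T(f)$ with eigenvalue $\lambda$ and some $\rho<1$ such that $$\frac{|\mathbf{x}_j|}{\max_i|\mathbf{x}_i|}\le C\,\lceil j/k\rceil\,\rho^{\lceil j/k\rceil-1},\qquad j\ge1,$$ where $C>0$ is a constant depending only on $\lambda$ and $a_p,b_p,c_p$, $1\le p\le k$.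
   Context: The tridiagonal $k$-Toeplitz operator $T(f)$ on $\ell^2(\mathbb{N})$ has matrix entries $(i,i)=a_{p(i)}$, $(i,i+1)=b_{p(i)}$, $(i+1,i)=c_{p(i)}$, $p(i)=((i-1)\bmod k)+1$, all other entries zero. Its symbol is $f(z)=A_{-1}z^{-1}+A_0+A_1z$, where $A_0$ is the $k\times k$ tridiagonal matrix with diagonal $a_1,\dots,a_k$, superdiagonal $b_1,\dots,b_{k-1}$, subdiagonal $c_1,\dots,c_{k-1}$; $A_{-1}$ has single nonzero entry $b_k$ at $(k,1)$; $A_1$ has single nonzero entry $c_k$ at $(1,k)$. $\mathbb{T}$ is the unit circle. $\sigma_{ess}(T(f))$ is the set of $\lambda$ with $T(f)-\lambda I$ not Fredholm. With $\lambda_1(z),\dots,\lambda_k(z)$ the eigenvalues of $f(z)$, $\sum_j\operatorname{wind}(\lambda_j(\mathbb{T}),\lambda)$ denotes the winding number about $0$ of $z\mapsto\det(f(z)-\lambda I)=\prod_j(\lambda_j(z)-\lambda)$ as $z$ traverses $\mathbb{T}$ counterclockwise. *)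

(* Defs.v *)
From HB Require Import structures.
From mathcomp Require Import all_boot all_order all_algebra.
From mathcomp Require Import all_classical all_reals all_analysis.
From mathcomp Require Import complex.
Set Implicit Arguments. Unset Strict Implicit. Unset Printing Implicit Defensive.
Import Order.TTheory GRing.Theory Num.Theory numFieldNormedType.Exports.
Local Open Scope ring_scope.
Local Open Scope classical_set_scope.

Definition cabs (R : realType) (z : R[i]) : R := ComplexField.Normc.normc z.

Definition expi (R : realType) (t : R) : R[i] := Complex (cos t) (sin t).

(* x is in l^2(N) (indices shifted: x n is the (n+1)-th coordinate) *)
Definition l2 (R : realType) (x : nat -> R[i]) : Prop :=
  (\sum_(n <oo) ((cabs (x n)) ^+ 2)%:E < +oo)%E.

Definition l2_cvg (R : realType) (y : nat -> nat -> R[i]) (x : nat -> R[i]) : Prop :=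
  (fun m => (\sum_(n <oo) ((cabs (y m n - x n)) ^+ 2)%:E)%E) @ \oo --> 0%E.

Definition lin_comb (R : realType) (s : seq (nat -> R[i])) (coef : nat -> R[i])
  : nat -> R[i] :=
  fun n => \sum_(i < size s) coef i * nth (fun _ => 0) s i n.

(* Fredholm operator on l^2(N): finite-dimensional kernel, closed range,
   finite-dimensional cokernel. *)
Definition fredholm (R : realType) (L : (nat -> R[i]) -> (nat -> R[i])) : Prop :=
  [/\ (exists s : seq (nat -> R[i]), (forall i, (i < size s)%N -> l2 (nth (fun _ => 0) s i)) /\
         forall x, l2 x -> L x = (fun _ => 0) -> exists coef, x = lin_comb s coef),
      (forall (xs : nat -> nat -> R[i]) (y : nat -> R[i]),
         (forall m, l2 (xs m)) -> l2 y -> l2_cvg (fun m => L (xs m)) y ->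
         exists x, l2 x /\ L x = y) &
      (exists s : seq (nat -> R[i]), (forall i, (i < size s)%N -> l2 (nth (fun _ => 0) s i)) /\
         forall y, l2 y -> exists x coef, l2 x /\ y = (fun n => L x n + lin_comb s coef n))].

Definition ess_spectrum (R : realType) (L : (nat -> R[i]) -> (nat -> R[i])) (lam : R[i])
  : Prop := ~ fredholm (fun x n => L x n - lam * x n).

(* tridiagonal k-Toeplitz operator, 0-indexed: row n has
   (n,n) = a_{p(n)}, (n,n+1) = b_{p(n)}, (n,n-1) = c_{p(n-1)},
   where coefficient a_p (1<=p<=k) of the paper is [a (p-1)] here
   and p(i) = ((i-1) mod k)+1 becomes n %% k. *)
Definition kToeplitz (R : realType) (k : nat) (a b c : nat -> R[i])
  (x : nat -> R[i]) : nat -> R[i] :=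
  fun n => (if n is n'.+1 then c (n' %% k)%N * x n' else 0)
           + a (n %% k)%N * x n + b (n %% k)%N * x n.+1.

Definition symA0 (R : realType) (k : nat) (a b c : nat -> R[i]) : 'M[R[i]]_k :=
  \matrix_(i, j) (if (i : nat) == j then a i
                  else if (j : nat) == i.+1 then b i
                  else if (i : nat) == j.+1 then c j else 0).
Definition symAm1 (R : realType) (k : nat) (b : nat -> R[i]) : 'M[R[i]]_k :=
  \matrix_(i, j) (if ((i : nat) == k.-1) && ((j : nat) == 0%N) then b k.-1 else 0).
Definition symA1 (R : realType) (k : nat) (c : nat -> R[i]) : 'M[R[i]]_k :=
  \matrix_(i, j) (if ((i : nat) == 0%N) && ((j : nat) == k.-1) then c k.-1 else 0).
Definition symbol (R : realType) (k : nat) (a b c : nat -> R[i]) (z : R[i])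
  : 'M[R[i]]_k :=
  z^-1 *: symAm1 k b + symA0 k a b c + z *: symA1 k c.

Definition winding_number (R : realType) (g : R -> R[i]) (w : int) : Prop :=
  (forall t : R, 0 <= t <= 1 -> g t != 0) /\
  exists theta : R -> R,
    [/\ {within `[(0 : R), 1], continuous theta},
        (forall t : R, 0 <= t <= 1 -> g t = ((cabs (g t))%:C)%C * expi (theta t)) &
        theta 1 - theta 0 = 2 * pi * w%:~R].

Definition char_curve (R : realType) (k : nat) (a b c : nat -> R[i]) (lam : R[i])
  (t : R) : R[i] :=
  \det (symbol k a b c (expi (2 * pi * t)) - lam%:M).

(* Main.v *)
Require Import Defs.
From HB Require Import structures.
From mathcomp Require Import all_boot all_order all_algebra.
From mathcomp Require Import all_classical all_reals all_analysis.
From mathcomp Require Import complex.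
From mathcomp Require Import ring lra zify.
Import Order.TTheory GRing.Theory Num.Theory numFieldNormedType.Exports.
Local Open Scope ring_scope.
Set Implicit Arguments. Unset Strict Implicit. Unset Printing Implicit Defensive.
Section Rec.
Variables (R : realType) (k : nat) (a b c : nat -> R[i]) (lam : R[i]).

Definition REC (s : nat -> R[i]) := forall n,
  s n.+2 = ((lam - a (n %% k)%N) * s n.+1 - c ((n + k.-1) %% k)%N * s n) / b (n %% k)%N.

Fixpoint st (p q : R[i]) (n : nat) : R[i] * R[i] :=
  match n with
  | 0 => (p, q)
  | n'.+1 => let (u, v) := st p q n' in
     (v, ((lam - a (n' %% k)%N) * v - c ((n' + k.-1) %% k)%N * u) / b (n' %% k)%N)
  end.
Definition sol p q n := (st p q n).1.

Lemma solS p q n : sol p q n.+1 = (st p q n).2.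
Proof. by rewrite /sol /=; case: (st p q n). Qed.

Lemma sol_rec p q : REC (sol p q).
Proof.
move=> n; rewrite !solS /sol /=; by case: (st p q n).
Qed.

Lemma sol0 p q : sol p q 0 = p. Proof. by []. Qed.
Lemma sol1 p q : sol p q 1 = q. Proof. by []. Qed.

Lemma rec_uniq s s' : REC s -> REC s' -> s 0 = s' 0 -> s 1 = s' 1 -> forall n, s n = s' n.
Proof.
move=> hs hs' h0 h1.
have H : forall n, s n = s' n /\ s n.+1 = s' n.+1.
  elim=> [|n [IH1 IH2]]; first by split.
  by split=> //; rewrite hs hs' IH1 IH2.
by move=> n; case: (H n).
Qed.

Lemma rec_lin s s' (al be : R[i]) : REC s -> REC s' -> REC (fun n => al * s n + be * s' n).
Proof. move=> hs hs' n; rewrite hs hs'; ring. Qed.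

Lemma rec_shift s : (0 < k)%N -> REC s -> REC (fun n => s (n + k)%N).
Proof.
move=> k0 hs n /=.
have -> : (n.+2 + k = (n + k).+2)%N by rewrite addSn addSn.
rewrite hs modnDr -addnA (addnC k) addnA modnDr.
by rewrite addSn.
Qed.

Definition m11 := sol 1 0 k.
Definition m12 := sol 0 1 k.
Definition m21 := sol 1 0 k.+1.
Definition m22 := sol 0 1 k.+1.
Definition trM := m11 + m22.
Definition detM := m11 * m22 - m12 * m21.

Lemma rec_decomp s : REC s -> forall n, s n = s 0 * sol 1 0 n + s 1 * sol 0 1 n.
Proof.
move=> hs; apply: rec_uniq => //.
  exact: rec_lin (sol_rec _ _) (sol_rec _ _).
- by rewrite !sol0; ring.
- by rewrite !sol1; ring.
Qed.

Lemma rec_period s : REC s -> s k = m11 * s 0 + m12 * s 1 /\ s k.+1 = m21 * s 0 + m22 * s 1.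
Proof.
move=> hs; rewrite !(rec_decomp hs k) !(rec_decomp hs k.+1) /m11 /m12 /m21 /m22.
by split; ring.
Qed.

Lemma rec_CH s : (0 < k)%N -> REC s -> forall n, s (n + 2 * k)%N = trM * s (n + k)%N - detM * s n.
Proof.
move=> k0 hs.
have hs1 := rec_shift k0 hs.
have hs2 := rec_shift k0 hs1.
have hu : REC (fun n => 1 * s (n + k + k)%N + (- trM) * s (n + k)%N).
  exact: rec_lin.
have hv : REC (fun n => 1 * (1 * s (n + k + k)%N + (- trM) * s (n + k)%N) + detM * s n).
  exact: rec_lin.
have hz : REC (fun _ => 0).
  by move=> n /=; ring.
move=> n.
have := rec_uniq hv hz _ _ n.
have [P1 P2] := rec_period hs.
have [Q1 Q2] := rec_period hs1.
rewrite /= !add0n in Q1 Q2 *.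
rewrite -!addnA addnn -mul2n.
move=> H; apply/eqP; rewrite -subr_eq0; apply/eqP.
have -> : s (n + 2 * k)%N - (trM * s (n + k)%N - detM * s n) =
   1 * (1 * s (n + 2 * k)%N + - trM * s (n + k)%N) + detM * s n by ring.
apply: H.
- rewrite mul2n -addnn Q1 add1n P1 P2 /trM /detM; ring.
- rewrite mul2n -addnn addnA add1n Q2 !add1n P1 P2 /trM /detM; ring.
Qed.

End Rec.
Section Bloch.
Variables (R : realType) (k : nat) (a b c : nat -> R[i]) (lam : R[i]).
Local Notation sol := (sol k a b c lam).
Local Notation REC := (REC k a b c lam).

Lemma eigvec mu : mu ^+ 2 - trM k a b c lam * mu + detM k a b c lam = 0 ->
  exists p q : R[i], (p != 0 \/ q != 0) /\
    m11 k a b c lam * p + m12 k a b c lam * q = mu * p /\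
    m21 k a b c lam * p + m22 k a b c lam * q = mu * q.
Proof.
rewrite /trM /detM.
set x11 := m11 _ _ _ _ _; set x12 := m12 _ _ _ _ _;
set x21 := m21 _ _ _ _ _; set x22 := m22 _ _ _ _ _ => H.
have [h12|h12] := eqVneq x12 0.
  have [h21|h21] := eqVneq x21 0.
    rewrite h12 h21 in H *.
    have : (mu - x11) * (mu - x22) = 0 by rewrite -H; ring.
    move/eqP; rewrite mulf_eq0 => /orP [] /eqP h.
      exists 1, 0; split; first by left; exact: oner_neq0.
      have -> : mu = x11 by apply/eqP; rewrite -subr_eq0 h.
      by split; ring.
    exists 0, 1; split; first by right; exact: oner_neq0.
    have -> : mu = x22 by apply/eqP; rewrite -subr_eq0 h.
    by split; ring.
  exists (mu - x22), x21; split; first by right.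
  split; last ring.
  rewrite h12 in H *; apply/eqP; rewrite -subr_eq0; apply/eqP.
  transitivity (- (mu ^+ 2 - (x11 + x22) * mu + (x11 * x22 - 0 * x21))); first ring.
  by rewrite H oppr0.
exists x12, (mu - x11); split; first by left.
split; first ring.
apply/eqP; rewrite -subr_eq0; apply/eqP.
transitivity (- (mu ^+ 2 - (x11 + x22) * mu + (x11 * x22 - x12 * x21))); first ring.
by rewrite H oppr0.
Qed.

Lemma bloch_shift mu p q : (0 < k)%N ->
  m11 k a b c lam * p + m12 k a b c lam * q = mu * p ->
  m21 k a b c lam * p + m22 k a b c lam * q = mu * q ->
  forall n, sol p q (n + k)%N = mu * sol p q n.
Proof.
move=> k0 h1 h2.
have hs := sol_rec k a b c lam p q.
have hsh := rec_shift k0 hs.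
have [P1 P2] := rec_period hs.
have hv : REC (fun n => 1 * sol p q (n + k)%N + (- mu) * sol p q n) by exact: rec_lin.
have hz : REC (fun _ => 0) by move=> n /=; ring.
move=> n; have := rec_uniq hv hz _ _ n => /=.
rewrite add0n add1n P1 P2 !sol0 !sol1 h1 h2.
move=> H; apply/eqP; rewrite -subr_eq0; apply/eqP.
rewrite -[RHS](H _ _); [ring | ring | ring].
Qed.

End Bloch.
Lemma sum_ind (R : realType) (k : nat) (e : nat) (X : R[i]) (f : nat -> R[i]) :
  \sum_(j < k) (if (j : nat) == e then X else 0) * f j = if (e < k)%N then X * f e else 0.
Proof.
case: ifP => ek.
  rewrite (bigD1 (Ordinal ek)) //= eqxx big1 ?addr0 // => j hj.
  case: eqP => [hje|]; last by rewrite mul0r.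
  by exfalso; move/eqP: hj; apply; apply/val_inj.
rewrite big1 // => j _; case: eqP => [hje|]; last by rewrite mul0r.
by exfalso; move: (ltn_ord j); rewrite hje ek.
Qed.

Lemma sum_ind2 (R : realType) (k : nat) (e : nat) (X : nat -> R[i]) (f : nat -> R[i]) :
  \sum_(j < k) (if (j : nat) == e then X j else 0) * f j = if (e < k)%N then X e * f e else 0.
Proof.
case: ifP => ek.
  rewrite (bigD1 (Ordinal ek)) //= eqxx big1 ?addr0 // => j hj.
  case: eqP => [hje|]; last by rewrite mul0r.
  by exfalso; move/eqP: hj; apply; apply/val_inj.
rewrite big1 // => j _; case: eqP => [hje|]; last by rewrite mul0r.
by exfalso; move: (ltn_ord j); rewrite hje ek.
Qed.

Section BlochDet.
Variables (R : realType) (k : nat) (a b c : nat -> R[i]) (lam : R[i]).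
Local Notation sol := (sol k a b c lam).

Lemma bloch_det mu p q : (0 < k)%N -> (forall j, (j < k)%N -> b j != 0) -> mu != 0 ->
  (p != 0 \/ q != 0) -> (forall n, sol p q (n + k)%N = mu * sol p q n) ->
  \det (symbol k a b c mu^-1 - lam%:M) = 0.
Proof.
move=> k0 bnz mu0 pq0 hsh.
set s := sol p q.
have hrec : forall n, (n < k)%N ->
   b n * s n.+2 = (lam - a n) * s n.+1 - c ((n + k.-1) %% k)%N * s n.
  move=> n nk; rewrite /s (sol_rec _ _ _ _ _ p q n) (modn_small nk).
  by rewrite mulrC divfK // bnz.
set u : 'cV[R[i]]_k := \col_(j < k) s j.+1.
set A := symbol k a b c mu^-1 - lam%:M.
have k1 : (k.-1 < k)%N by rewrite ltn_predL.
have sk : s k.-1.+1 = mu * s 0 by rewrite prednK // -[k in LHS]add0n /s hsh.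
have Au : A *m u = 0.
  apply/matrixP => i j0; rewrite !mxE.
  have E : forall j : 'I_k, A i j * u j j0 =
     (if (j : nat) == i then a i - lam else 0) * s j.+1
   + (if (j : nat) == i.+1 then b i else 0) * s j.+1
   + (if (i : nat) == j.+1 then c j else 0) * s j.+1
   + (if (j : nat) == 0%N then (if (i : nat) == k.-1 then mu * b k.-1 else 0) else 0) * s j.+1
   + (if (j : nat) == k.-1 then (if (i : nat) == 0%N then mu^-1 * c k.-1 else 0) else 0) * s j.+1.
    move=> j; rewrite /A /symbol !mxE invrK.
    case: (eqVneq (i : nat) j) => [eij|nij].
      have -> : i = j by apply: val_inj.
      rewrite !eqxx /= (_ : ((j : nat) == j.+1) = false) ?(_ : ((j.+1 : nat) == j) = false);
        try by apply/negbTE; rewrite ?ieqn_leq ?ltnn // neq_ltn ltnSn ?orbT.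
      by case: ((j : nat) == 0%N); case: ((j : nat) == k.-1); rewrite /= ; ring.
    have -> : (i == j) = false by apply/negbTE; apply: contra nij => /eqP ->.
    rewrite mulr0n subr0 mul0r add0r.
    have [eji|nji] := eqVneq (j : nat) i.+1.
      rewrite eji (_ : ((i : nat) == i.+2) = false); last by apply/negbTE; rewrite neq_ltn ltnW.
      rewrite -eji.
      by case: ((j : nat) == 0%N); case: ((i : nat) == k.-1); case: ((j : nat) == k.-1);
         case: ((i : nat) == 0%N); rewrite /=; ring.
    rewrite ?(negbTE nji).
    by case: ((i : nat) == j.+1); case: ((j : nat) == 0%N);
       case: ((i : nat) == k.-1); case: ((j : nat) == k.-1); case: ((i : nat) == 0%N);
       rewrite /=; ring.
  rewrite (eq_bigr _ (fun j _ => E j)) !big_split /=.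
  rewrite !(sum_ind k _ _ (fun j => s j.+1)).
  have ik := ltn_ord i.
  have sk1 : s k.+1 = mu * s 1 by have := hsh 1%N; rewrite add1n.
  have H1 : (if (i.+1 < k)%N then b i * s i.+2 else 0) +
            (if (0 < k)%N then (if (i : nat) == k.-1 then mu * b k.-1 else 0) * s 1%N else 0)
            = b i * s i.+2.
    rewrite k0; case: ifP => h.
      rewrite (_ : ((i : nat) == k.-1) = false) ?mul0r ?addr0 //.
      by apply/negbTE; rewrite neq_ltn -ltnS prednK // h.
    have ei : (i : nat) = k.-1.
      by apply/eqP; rewrite eqn_leq -ltnS prednK // ik /= -ltnS prednK // leqNgt h.
    by rewrite ei eqxx add0r prednK // sk1; ring.
  have H2 : \sum_(i0 < k) (if (i : nat) == i0.+1 then c i0 else 0) * s i0.+1 +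
     (if (k.-1 < k)%N then (if (i : nat) == 0%N then mu^-1 * c k.-1 else 0) * s k.-1.+1 else 0)
     = c (((i : nat) + k.-1) %% k)%N * s i.
    rewrite k1 sk; move: ik; case: (i : nat) => [|i'] ik /=.
      rewrite big1 ?add0r ?modn_small //; last by move=> j _; rewrite mul0r.
      by rewrite add0n mulrAC mulKf // mulrC.
    rewrite mul0r addr0.
    under eq_bigr => j _ do rewrite eqSS eq_sym.
    rewrite (sum_ind2 k _ c (fun j => s j.+1)) (ltnW ik) addSn -addnS prednK // modnDr modn_small //; exact: ltnW.
  rewrite ik.
  set X2 := (if (i.+1 < k)%N then _ else _) in H1 *.
  set X4 := (if (0 < k)%N then _ else _) in H1 *.
  set S := \sum_(_ < _) _ in H2 *.
  set X5 := (if (k.-1 < k)%N then _ else _) in H2 *.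
  have -> : (a i - lam) * s i.+1 + X2 + S + X4 + X5 = (a i - lam) * s i.+1 + (X2 + X4) + (S + X5) by ring.
  rewrite H1 H2 hrec //; ring.
rewrite -det_tr; apply/eqP/det0P; exists u^T.
  apply/negP => /eqP u0.
  have ue : forall j, (j < k)%N -> s j.+1 = 0.
    move=> j jk; have := congr1 (fun M : 'rV_k => M ord0 (Ordinal jk)) u0; by rewrite !mxE.
  have q0 : q = 0 := ue 0%N k0.
  have p0 : p = 0.
    have := ue k.-1 k1; rewrite sk => /eqP; rewrite mulf_eq0 (negbTE mu0) /= => /eqP //.
  by case: pq0; rewrite ?p0 ?q0 eqxx.
by rewrite -trmx_mul Au trmx0.
Qed.

End BlochDet.
Lemma detR1 (F : comRingType) n (A G : 'M[F]_n) (r : 'I_n) z :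
  (forall i j, i != r -> G i j = 0) ->
  \det (A + z *: G) = \det A + z * \det (\matrix_(i, j) if i == r then G i j else A i j).
Proof.
move=> Gr.
rewrite -[\det A]mul1r.
apply: (determinant_multilinear (i0 := r)).
- by apply/matrixP => i j; rewrite !mxE eqxx mul1r.
- apply/matrixP => i j; rewrite !mxE Gr ?mulr0 ?addr0 //; rewrite eq_sym; exact: neq_lift.
- apply/matrixP => i j; rewrite !mxE Gr ?mulr0 ?addr0 //; last by rewrite eq_sym; exact: neq_lift.
  by rewrite eq_sym (negbTE (neq_lift _ _)).
Qed.

Lemma det_laurent (F : comRingType) n (D E G : 'M[F]_n) (r0 r1 : 'I_n) :
  (forall i j, i != r1 -> E i j = 0) -> (forall i j, i != r0 -> G i j = 0) ->
  exists al be ga de : F, forall w z,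
    \det (D + w *: E + z *: G) = al + be * w + ga * z + de * (w * z).
Proof.
move=> Er Gr.
set E2 := \matrix_(i, j) (if i == r0 then 0 else E i j) : 'M[F]_n.
exists (\det D), (\det (\matrix_(i, j) if i == r1 then E i j else D i j)),
  (\det (\matrix_(i, j) if i == r0 then G i j else D i j)),
  (\det (\matrix_(i, j) if i == r1 then E2 i j else
     (\matrix_(i, j) if i == r0 then G i j else D i j) i j)).
move=> w z.
rewrite (@detR1 _ _ _ _ r0) // (@detR1 _ _ _ _ r1) //.
have -> : (\matrix_(i, j) (if i == r0 then G i j else (D + w *: E) i j)) =
   (\matrix_(i, j) (if i == r0 then G i j else D i j)) + w *: E2.
  apply/matrixP => i j; rewrite !mxE; case: (i == r0) => //; by rewrite mulr0 addr0.
rewrite (@detR1 _ _ _ _ r1); last first.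
  move=> i j hi; rewrite mxE Er // ; by case: ifP.
by ring.
Qed.

Lemma det_symbol (R : realType) (k : nat) (a b c : nat -> R[i]) (lam : R[i]) :
  (0 < k)%N -> exists al be ga : R[i], forall z, z != 0 ->
    \det (symbol k a b c z - lam%:M) = al + be * z^-1 + ga * z.
Proof.
move=> k0.
have k1 : (k.-1 < k)%N by rewrite ltn_predL.
have h1 : forall (i : 'I_k) j, i != Ordinal k1 -> symAm1 k b i j = 0.
  move=> i j hi; rewrite mxE; case: ifP => // /andP [/eqP hi' _].
  by exfalso; move/eqP: hi; apply; apply: val_inj.
have h2 : forall (i : 'I_k) j, i != Ordinal k0 -> symA1 k c i j = 0.
  move=> i j hi; rewrite mxE; case: ifP => // /andP [/eqP hi' _].
  by exfalso; move/eqP: hi; apply; apply: val_inj.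
have [al [be [ga [de H]]]] := det_laurent (symA0 k a b c - lam%:M) h1 h2.
exists (al + de), be, ga => z z0.
have -> : symbol k a b c z - lam%:M = (symA0 k a b c - lam%:M) + z^-1 *: symAm1 k b + z *: symA1 k c.
  by apply/matrixP => i j; rewrite !mxE; ring.
rewrite H mulVf //; ring.
Qed.
Section Expi.
Variable R : realType.
Local Open Scope complex_scope.

Lemma expiD (x y : R) : expi (x + y) = expi x * expi y.
Proof. rewrite /expi; simpc; rewrite cosD sinD; congr (_ +i* _); ring. Qed.

Lemma expi0 : expi (0 : R) = 1.
Proof. by rewrite /expi cos0 sin0. Qed.

Lemma expiN (x : R) : expi (- x) = (expi x)^-1.
Proof.
apply: (@mulIf _ (expi x)).
  by apply/eqP => /(congr1 (fun z : R[i] => let: Complex u v := z in u ^+ 2 + v ^+ 2));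
     rewrite /= cos2Dsin2 expr0n /= addr0 => /eqP; rewrite oner_eq0.
by rewrite -expiD addNr expi0 mulVf //;
   apply/eqP => /(congr1 (fun z : R[i] => let: Complex u v := z in u ^+ 2 + v ^+ 2));
     rewrite /= cos2Dsin2 expr0n /= addr0 => /eqP; rewrite oner_eq0.
Qed.

Lemma cabs_expi (x : R) : cabs (expi x) = 1.
Proof. by rewrite /cabs /expi /= cos2Dsin2 sqrtr1. Qed.

Lemma cabsM (x y : R[i]) : cabs (x * y) = cabs x * cabs y.
Proof. exact: ComplexField.Normc.normcM. Qed.

Lemma cabs_real (r : R) : 0 <= r -> cabs (r%:C) = r.
Proof. by move=> r0; rewrite /cabs /= expr0n /= addr0 sqrtr_sqr ger0_norm. Qed.

Lemma cabs_ge0 (x : R[i]) : 0 <= cabs x.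
Proof. by case: x => u v; rewrite /cabs /= sqrtr_ge0. Qed.

Lemma cabs_eq0 (x : R[i]) : (cabs x == 0) = (x == 0).
Proof.
apply/eqP/eqP => [|->]; first exact: ComplexField.Normc.eq0_normc.
exact: ComplexField.Normc.normc0.
Qed.

Lemma polar_atan (u v : R) : 0 < u ->
  (u +i* v) = (cabs (u +i* v))%:C * expi (atan (v / u)).
Proof.
move=> u0; rewrite /cabs /expi /=; simpc.
set x := v / u.
have hc : cos (atan x) = (Num.sqrt (1 + x ^+ 2))^-1 by rewrite cos_atan.
have cne : cos (atan x) != 0 by rewrite hc invr_eq0 sqrtr_eq0 -ltNge ltr_wpDr ?sqr_ge0.
have hs : sin (atan x) = x * cos (atan x).
  have [_ ht] := atan_def x.
  by move: ht; rewrite /tan => ht; rewrite -[X in X * _]ht divfK.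
have hsq : Num.sqrt (u ^+ 2 + v ^+ 2) = u * Num.sqrt (1 + x ^+ 2).
  have e : u ^+ 2 + v ^+ 2 = u ^+ 2 * (1 + x ^+ 2).
    rewrite /x; field; by rewrite gt_eqF.
  by rewrite e sqrtrM ?sqr_ge0 // sqrtr_sqr ger0_norm // ltW.
have sq0 : Num.sqrt (1 + x ^+ 2) != 0.
  by rewrite sqrtr_eq0 -ltNge ltr_wpDr ?sqr_ge0.
rewrite hs hc hsq; congr (_ +i* _).
  by rewrite -mulrA mulfV // mulr1.
rewrite /x; field; by rewrite sq0 gt_eqF.
Qed.

End Expi.
Section Lift.
Variable R : realType.
Local Open Scope complex_scope.

Lemma realC_eq0 (r : R) : (r%:C == 0 :> R[i]) = (r == 0).
Proof.
apply/eqP/eqP => [H|->]; last by rewrite rmorph0.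
by have := congr1 (fun z : R[i] => let: Complex u _ := z in u) H.
Qed.

Lemma expi_neq0 (x : R) : expi x != 0.
Proof. by rewrite -cabs_eq0 cabs_expi oner_eq0. Qed.

Lemma expi_eq_cos (x d : R) : expi (x + d) = expi x -> cos d = 1.
Proof.
move=> H.
have : expi d = 1.
  by rewrite -[d](addKr x) expiD expiN H mulVf // expi_neq0.
by rewrite /expi => -[].
Qed.

Lemma cos_eq1_pi (d : R) : 0 <= d <= pi -> cos d = 1 -> d = 0.
Proof.
move=> hd hc.
apply: (@cos_inj R); rewrite ?in_itv /= ?hd ?lexx ?(ltW (pi_gt0 R)) //.
by rewrite hc cos0.
Qed.

Lemma expi_const (h : R -> R) :
  {within `[0, 1], continuous h}%classic ->
  (forall t, 0 <= t <= 1 -> expi (h t) = expi (h 0)) -> h 1 = h 0.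
Proof.
move=> hc he.
have pi0 := pi_gt0 R.
have [h01|h10|//] := ltgtP (h 0) (h 1).
- set d := Num.min (h 1 - h 0) pi.
  have d0 : 0 < d by rewrite lt_min subr_gt0 h01 pi0.
  have d1 : d <= h 1 - h 0 by rewrite /d ge_min lexx.
  have d2 : d <= pi by rewrite /d ge_min lexx orbT.
  have [t ht htv] : exists2 t, t \in `[(0:R), 1] & h t = h 0 + d.
    apply: IVT => //.
    rewrite /Num.min /Num.max h01 /=; apply/andP; split; lra.
  move: ht; rewrite in_itv /= => ht.
  have := he t ht; rewrite htv => /expi_eq_cos hcd.
  have dz : d = 0 by apply: cos_eq1_pi => //; rewrite (ltW d0) d2.
  by move: d0; rewrite dz ltxx.
- set d := Num.min (h 0 - h 1) pi.
  have d0 : 0 < d by rewrite lt_min subr_gt0 h10 pi0.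
  have d1 : d <= h 0 - h 1 by rewrite /d ge_min lexx.
  have d2 : d <= pi by rewrite /d ge_min lexx orbT.
  have [t ht htv] : exists2 t, t \in `[(0:R), 1] & h t = h 0 + - d.
    apply: IVT => //.
    rewrite min_r ?max_l ?(ltW h10) //; apply/andP; split; lra.
  move: ht; rewrite in_itv /= => ht.
  have := he t ht; rewrite htv => /expi_eq_cos; rewrite cosN => hcd.
  have dz : d = 0 by apply: cos_eq1_pi => //; rewrite (ltW d0) d2.
  by move: d0; rewrite dz ltxx.
Qed.

Lemma lift_unique (g : R -> R[i]) (th L N : R -> R) (K : R[i]) :
  {within `[0, 1], continuous th}%classic -> {within `[0, 1], continuous L}%classic ->
  K != 0 ->
  (forall t, 0 <= t <= 1 -> g t = (cabs (g t))%:C * expi (th t)) ->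
  (forall t, 0 <= t <= 1 -> 0 < N t /\ g t = K * (N t)%:C * expi (L t)) ->
  th 1 - th 0 = L 1 - L 0.
Proof.
move=> thc Lc K0 hth hL.
have hc := within_continuousB thc Lc.
have cK : (cabs K)%:C != 0 by rewrite realC_eq0 cabs_eq0.
have key : forall t, 0 <= t <= 1 -> expi (th t - L t) = K / (cabs K)%:C.
  move=> t ht.
  have [N0 e] := hL t ht.
  have e2 := hth t ht.
  have ng : cabs (g t) = cabs K * N t.
    by rewrite e !cabsM cabs_expi mulr1 cabs_real // ltW.
  rewrite ng in e2.
  rewrite expiD expiN.
  have NC : (N t)%:C != 0 by rewrite realC_eq0 gt_eqF.
  have eL := expi_neq0 (L t).
  rewrite e in e2.
  apply: (@mulIf _ ((cabs K)%:C * (N t)%:C * expi (L t))).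
    by rewrite !mulf_neq0.

  move: e2; rewrite rmorphM => e2.
  rewrite [LHS](_ : _ = ((cabs K)%:C * (N t)%:C * expi (th t))); last first.
    by field.
  by rewrite -e2; field.
have h1 := expi_const hc.
have : th 1 - L 1 = th 0 - L 0.
  apply: h1 => t ht; rewrite !key //.
  by rewrite lexx ler01.
by move=> e; lra.
Qed.

End Lift.
Section CH.
Variable R : realType.
Lemma cD (f g : R -> R) : continuous f -> continuous g -> continuous (fun t => f t + g t).
Proof. move=> hf hg x; exact: (continuousD (hf x) (hg x)). Qed.
Lemma cB (f g : R -> R) : continuous f -> continuous g -> continuous (fun t => f t - g t).
Proof. move=> hf hg x; exact: (continuousB (hf x) (hg x)). Qed.
Lemma cM (f g : R -> R) : continuous f -> continuous g -> continuous (fun t => f t * g t).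
Proof. move=> hf hg x; exact: (continuousM (hf x) (hg x)). Qed.
Lemma cV (f : R -> R) : continuous f -> (forall t, f t != 0) -> continuous (fun t => (f t)^-1).
Proof. move=> hf h x; exact: (continuousV (h x) (hf x)). Qed.
Lemma cC (y : R) : continuous (fun _ : R => y).
Proof. exact: cst_continuous. Qed.
Lemma cComp (f g : R -> R) : continuous f -> continuous g -> continuous (fun t => g (f t)).
Proof. move=> hf hg x. change ({for x, continuous (g \o f)}). apply: continuous_comp. apply: hf. apply: hg. Qed.
Lemma cId : continuous (fun t : R => t).
Proof. move=> x; exact: cvg_id. Qed.
End CH.

Section LiftFactor.
Variable R : realType.
Local Open Scope complex_scope.

Lemma cont_scale (s : R) : continuous (fun t : R => s * t).
Proof.
have -> : (fun t : R => s * t) = (fun t => t * s) by apply: funext => t; rewrite mulrC.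
exact: mulrr_continuous.
Qed.

Lemma cont_cos_scale (s : R) : continuous (fun t : R => cos (s * t)).
Proof. move=> x. change ({for x, continuous (cos \o (fun t => s * t))}).
apply: continuous_comp. apply: cont_scale. apply: continuous_cos. Qed.

Lemma cont_sin_scale (s : R) : continuous (fun t : R => sin (s * t)).
Proof. move=> x. change ({for x, continuous (sin \o (fun t => s * t))}).
apply: continuous_comp. apply: cont_scale. apply: continuous_sin. Qed.

Lemma lift_factor (zr zi s : R) : cabs (zr +i* zi) < 1 ->
  exists l : R -> R, [/\ continuous l,
    (forall t, 0 < cabs (1 + (zr +i* zi) * expi (s * t))),
    (forall t, 1 + (zr +i* zi) * expi (s * t) =
               (cabs (1 + (zr +i* zi) * expi (s * t)))%:C * expi (l t)) &
    (cos s = 1 -> l 1 = l 0)].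
Proof.
move=> hz.
have hq : zr ^+ 2 + zi ^+ 2 < 1.
  by move: hz; rewrite /cabs /= -{1}sqrtr1 ltr_sqrt.
set Pre := fun t => 1 + (zr * cos (s * t) - zi * sin (s * t)).
set Pim := fun t => zr * sin (s * t) + zi * cos (s * t).
have PE : forall t, 1 + (zr +i* zi) * expi (s * t) = Pre t +i* Pim t.
  by move=> t; rewrite /expi /Pre /Pim; simpc; congr (_ +i* _); ring.
have Pre0 : forall t, 0 < Pre t.
  move=> t; rewrite /Pre.
  have cs := cos2Dsin2 (s * t).
  set C := cos (s * t) in cs *; set S := sin (s * t) in cs *.
  have : (zr * C - zi * S) ^+ 2 <= zr ^+ 2 + zi ^+ 2.
    have -> : zr ^+ 2 + zi ^+ 2 = (zr * C - zi * S) ^+ 2 + (zr * S + zi * C) ^+ 2.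
      transitivity ((zr ^+ 2 + zi ^+ 2) * (C ^+ 2 + S ^+ 2)); first by rewrite cs mulr1.
      ring.
    by rewrite lerDl sqr_ge0.
  move=> h; nra.
exists (fun t => atan (Pim t / Pre t)); split.
- apply: (cComp _ (@continuous_atan R)).
  apply: cM.
    apply: cD; apply: cM; [exact: cC | exact: cont_sin_scale | exact: cC | exact: cont_cos_scale].
  apply: cV; last by move=> t; rewrite gt_eqF.
  apply: cD; first exact: cC.
  apply: cB; apply: cM; [exact: cC | exact: cont_cos_scale | exact: cC | exact: cont_sin_scale].
- move=> t; rewrite PE lt_neqAle cabs_ge0 andbT eq_sym cabs_eq0.
  by apply/negP => /eqP [] /eqP; rewrite gt_eqF.
- by move=> t; rewrite PE; apply: polar_atan.
- move=> cs1.
  have ss : sin s = 0.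
    have := cos2Dsin2 s; rewrite cs1 expr1n => h.
    have : sin s ^+ 2 = 0 by lra.
    by move/eqP; rewrite sqrf_eq0 => /eqP.
  by rewrite /Pre /Pim !mulr1 !mulr0 cs1 ss cos0 sin0.
Qed.

End LiftFactor.
Section Angle.
Variable R : realType.
Local Open Scope complex_scope.

Lemma cos2pi' : cos (2 * pi) = 1 :> R.
Proof. by rewrite mulr_natl cos2pi. Qed.
Lemma sin2pi' : sin (2 * pi) = 0 :> R.
Proof. by rewrite mulr_natl sin2pi. Qed.

Lemma angle (r : R[i]) : cabs r = 1 -> exists t : R, 0 <= t <= 1 /\ expi (2 * pi * t) = r.
Proof.
case: r => x y; rewrite /cabs /= => h.
have h1 : x ^+ 2 + y ^+ 2 = 1.
  by rewrite -(@sqr_sqrtr _ (x ^+ 2 + y ^+ 2)) ?h ?expr1n // addr_ge0 // sqr_ge0.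
have hx : -1 <= x <= 1 by apply/andP; split; nra.
have [ac1 ac2] := acos_def hx.
have pi0 := pi_gt0 R.
have sa : sin (acos x) = `|y|.
  by rewrite sin_acos // (_ : 1 - x ^+ 2 = y ^+ 2) ?sqrtr_sqr //; lra.
have [y0|y0] := leP 0 y.
  exists (acos x / (2 * pi)); split.
    apply/andP; split; first by apply: divr_ge0; lra.
    by rewrite ler_pdivrMr; lra.
  rewrite mulrC divfK; last by apply: lt0r_neq0; lra.
  by rewrite /expi ac2 sa ger0_norm.
exists (1 - acos x / (2 * pi)); split.
  have : acos x / (2 * pi) <= 1 / 2 by rewrite ler_pdivrMr; lra.
  have : 0 <= acos x / (2 * pi) by apply: divr_ge0; lra.
  move=> *; apply/andP; split; lra.
rewrite mulrBr mulr1 mulrCA mulfV ?mulr1; last by apply: lt0r_neq0; lra.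
rewrite /expi cosB sinB cos2pi' sin2pi' ac2 sa ltr0_norm //.
congr (_ +i* _); ring.
Qed.

End Angle.
Section RootOutside.
Variables (R : realType) (k : nat) (a b c : nat -> R[i]) (lam : R[i]).
Local Open Scope complex_scope.

Lemma cabsN (z : R[i]) : cabs (- z) = cabs z.
Proof. by case: z => u v; rewrite /cabs /= !sqrrN. Qed.

Lemma cabsV (z : R[i]) : cabs (z^-1) = (cabs z)^-1.
Proof. exact: ComplexField.Normc.normcV. Qed.

Lemma expiNt (t : R) : expi ((- (2 * pi)) * t) = (expi (2 * pi * t))^-1.
Proof. by rewrite mulNr expiN. Qed.

Lemma root_outside : (0 < k)%N ->
  (exists w : int, winding_number (char_curve k a b c lam) w /\ w < 0) ->
  forall z : R[i], z != 0 -> \det (symbol k a b c z - lam%:M) = 0 -> 1 < cabs z.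
Proof.
move=> k0 [w [[gnz [th [thc thpol thw]]] wneg]] z z0 dz.
have [al [be [ga hdet]]] := det_symbol a b c lam k0.
set e := fun t : R => expi (2 * pi * t).
have e0 : forall t, e t != 0 by move=> t; exact: expi_neq0.
have ge : forall t, char_curve k a b c lam t = al + be * (e t)^-1 + ga * e t.
  by move=> t; rewrite /char_curve hdet // e0.
have root : al + be * z^-1 + ga * z = 0 by rewrite -hdet.
set D := al + ga * z.
have hb : be = - (D * z).
  have := congr1 (fun x => x * z) root.
  rewrite !mulrDl -(mulrA be) mulVf // mulr1 mul0r => h.
  by apply/eqP; rewrite -(subr_eq0 be) opprK /D -h; apply/eqP; ring.
have fact : forall t, char_curve k a b c lam t = (1 - z * (e t)^-1) * (ga * e t + D).
  move=> t; rewrite ge hb /D; field; exact: e0.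
have pi0 := pi_gt0 R.
have contra0 : forall t, 0 <= t <= 1 -> char_curve k a b c lam t = 0 -> False.
  by move=> t ht h; move: (gnz t ht); rewrite h eqxx.
rewrite ltNge; apply/negP => zle.
have [zlt|zgt|zeq] := ltgtP (cabs z) 1; first last.
- have [t [ht et]] := angle zeq.
  apply: (contra0 t ht); rewrite ge /e et -root; ring.
- by move: zle; rewrite leNgt zgt.
case E: (- z) => [nzr nzi].
have nzlt : cabs (nzr +i* nzi) < 1 by rewrite -E cabsN.
have [l1 [l1c l1pos l1pol l1per]] := lift_factor (- (2 * pi)) nzlt.
have l1p : l1 1 = l1 0 by apply: l1per; rewrite cosN cos2pi'.
have P1E : forall t, 1 - z * (e t)^-1 = 1 + (nzr +i* nzi) * expi ((- (2 * pi)) * t).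
  by move=> t; rewrite -E expiNt mulNr.
have thw' : th 1 - th 0 = 2 * pi * w%:~R by [].
have [gaD|Dga|eqD] := ltgtP (cabs ga) (cabs D).
-
  have D0 : D != 0 by rewrite -cabs_eq0 gt_eqF // (le_lt_trans (cabs_ge0 _) gaD).
  case E2: (ga / D) => [zr2 zi2].
  have z2lt : cabs (zr2 +i* zi2) < 1.
    by rewrite -E2 cabsM cabsV ltr_pdivrMr ?mul1r // (le_lt_trans (cabs_ge0 _) gaD).
  have [l2 [l2c l2pos l2pol l2per]] := lift_factor (2 * pi) z2lt.
  have l2p : l2 1 = l2 0 by apply: l2per; rewrite cos2pi'.
  have := @lift_unique R (char_curve k a b c lam) th (fun t => l1 t + l2 t)
    (fun t => cabs (1 + (nzr +i* nzi) * expi ((- (2 * pi)) * t)) *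
              cabs (1 + (zr2 +i* zi2) * expi (2 * pi * t))) D thc.
  move=> /(_ _ D0 thpol) H.
  have L := H _ _; clear H.
  have HH : th 1 - th 0 = l1 1 + l2 1 - (l1 0 + l2 0).
    apply: (L (continuous_subspaceT (cD l1c l2c))) => t ht; split.
      by rewrite mulr_gt0.
    rewrite fact P1E (_ : ga * e t + D = D * (1 + (zr2 +i* zi2) * expi (2 * pi * t))); last first.
      by rewrite -E2 /e; field.
    rewrite {1}(l1pol t) {1}(l2pol t) rmorphM expiD; ring.
  have : (w%:~R : R) = 0.
    apply: (@mulfI _ (2 * pi)); first by rewrite mulf_neq0 ?gt_eqF.
    by rewrite -thw' HH l1p l2p mulr0; ring.
  by move=> w0; move: wneg; rewrite -(ltrz0 R) w0 ltxx.
- have ga0 : ga != 0 by rewrite -cabs_eq0 gt_eqF // (le_lt_trans (cabs_ge0 _) Dga).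
  case E2: (D / ga) => [zr2 zi2].
  have z2lt : cabs (zr2 +i* zi2) < 1.
    by rewrite -E2 cabsM cabsV ltr_pdivrMr ?mul1r // (le_lt_trans (cabs_ge0 _) Dga).
  have [l2 [l2c l2pos l2pol l2per]] := lift_factor (- (2 * pi)) z2lt.
  have l2p : l2 1 = l2 0 by apply: l2per; rewrite cosN cos2pi'.
  have := @lift_unique R (char_curve k a b c lam) th (fun t => l1 t + l2 t + 2 * pi * t)
    (fun t => cabs (1 + (nzr +i* nzi) * expi ((- (2 * pi)) * t)) *
              cabs (1 + (zr2 +i* zi2) * expi ((- (2 * pi)) * t))) ga thc.
  move=> /(_ _ ga0 thpol) H.
  have L := H _ _; clear H.
  have HH : th 1 - th 0 = l1 1 + l2 1 + 2 * pi * 1 - (l1 0 + l2 0 + 2 * pi * 0).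
    have Lc : continuous (fun t => l1 t + l2 t + 2 * pi * t) := cD (cD l1c l2c) (@cont_scale _ (2 * pi)).
    apply: (L (continuous_subspaceT Lc)) => t ht; split.
      by rewrite mulr_gt0.
    rewrite fact P1E (_ : ga * e t + D = ga * (1 + (zr2 +i* zi2) * expi ((- (2 * pi)) * t)) * e t); last first.
      by rewrite -E2 expiNt -/(e t); field; rewrite ga0 e0.
    rewrite {1}(l1pol t) {1}(l2pol t) rmorphM !expiD /e; ring.
  have : (w%:~R : R) = 1.
    apply: (@mulfI _ (2 * pi)); first by rewrite mulf_neq0 ?gt_eqF.
    by rewrite -thw' HH l1p l2p; ring.
  by move=> w1; move: wneg; rewrite -(ltrz0 R) w1 ltr10.
- have [ga0|ga0] := eqVneq ga 0.
    have D0 : D = 0 by apply/eqP; rewrite -cabs_eq0 -eqD ga0 cabs_eq0.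
    by apply: (contra0 0); [rewrite lexx ler01 | rewrite fact ga0 D0; ring].
  have y1 : cabs (- D / ga) = 1.
    by rewrite cabsM cabsN cabsV -eqD mulfV // cabs_eq0.
  have [t [ht et]] := angle y1.
  apply: (contra0 t ht); rewrite fact /e et; field.
  by rewrite ga0 -cabs_eq0 -eqD cabs_eq0 ga0.
Qed.


End RootOutside.
Section Bounds.
Variable R : realType.
Local Open Scope complex_scope.

Lemma cabsD (x y : R[i]) : cabs (x + y) <= cabs x + cabs y.
Proof. exact: le_normcD. Qed.

Lemma cabs_expr (z : R[i]) n : cabs (z ^+ n) = cabs z ^+ n.
Proof.
elim: n => [|n IH]; first by rewrite !expr0 /cabs /= expr0n /= addr0 expr1n sqrtr1.
by rewrite !exprS cabsM IH.
Qed.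

Lemma rec2_bound (y : nat -> R[i]) (m1 m2 : R[i]) (r : R) :
  0 < r -> cabs m1 <= r -> cabs m2 <= r ->
  (forall j, y j.+2 = (m1 + m2) * y j.+1 - m1 * m2 * y j) ->
  forall j, cabs (y j) <= r ^+ j * (cabs (y 0%N) + j%:R * (cabs (y 1%N - m1 * y 0%N) / r)).
Proof.
move=> r0 h1 h2 hrec.
set e0 := y 1%N - m1 * y 0%N.
have he : forall j, y j.+1 - m1 * y j = m2 ^+ j * e0.
  elim=> [|j IH]; first by rewrite expr0 mul1r.
  transitivity (m2 * (y j.+1 - m1 * y j)); first by rewrite hrec; ring.
  by rewrite IH exprS mulrA.
have hee : forall j, cabs (y j.+1 - m1 * y j) <= r ^+ j * cabs e0.
  move=> j; rewrite he cabsM cabs_expr ler_wpM2r ?cabs_ge0 //.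
  by rewrite lerXn2r ?nnegrE ?cabs_ge0 // ltW.
elim=> [|j IH]; first by rewrite expr0 mul1r mul0r addr0.
have -> : y j.+1 = m1 * y j + (y j.+1 - m1 * y j) by ring.
apply: (le_trans (cabsD _ _)).
rewrite cabsM.
have A := cabs_ge0 (y j).
have B := cabs_ge0 m1.
have C : 0 <= cabs e0 / r by rewrite divr_ge0 ?cabs_ge0 // ltW.
have rj : 0 <= r ^+ j by rewrite exprn_ge0 // ltW.
have step1 : cabs m1 * cabs (y j) <= r * (r ^+ j * (cabs (y 0%N) + j%:R * (cabs e0 / r))).
  by apply: ler_pM => //.
have step2 : r ^+ j * cabs e0 = r ^+ j.+1 * (cabs e0 / r).
  by rewrite exprSr -mulrA (mulrCA r) mulfV ?mulr1 // gt_eqF.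
apply: (le_trans (lerD step1 (hee j))).
rewrite step2 mulrA -exprS -addn1 natrD le_eqVlt; apply/orP; left; apply/eqP; ring.
Qed.

Lemma bernoulli (e : R) n : 0 <= e <= 1 -> 1 - n%:R * e <= (1 - e) ^+ n.
Proof.
move=> /andP [e0 e1]; elim: n => [|n IH]; first by rewrite mul0r subr0 expr0.
rewrite exprS mulrSr.
have h : 0 <= 1 - e by rewrite subr_ge0.
have h2 : (1 - n%:R * e) * (1 - e) <= (1 - e) * (1 - e) ^+ n.
  by rewrite mulrC ler_wpM2l.
have h3 : 0 <= n%:R * e * e by rewrite mulr_ge0 // mulr_ge0.
apply: le_trans h2; nra.
Qed.

Lemma lin_geom (r s : R) : 0 <= r -> r < s -> exists C : R, 0 <= C /\
  forall j : nat, j.+1%:R * r ^+ j <= C * s ^+ j.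
Proof.
move=> r0 rs.
have s0 : 0 < s by apply: le_lt_trans rs.
set q := r / s.
have q0 : 0 <= q by rewrite divr_ge0 // ltW.
have q1 : q < 1 by rewrite ltr_pdivrMr // mul1r.
exists (1 - q)^-1; split; first by rewrite invr_ge0 subr_ge0 ltW.
move=> j.
have hq : j.+1%:R * q ^+ j <= (1 - q)^-1.
  have : j.+1%:R * q ^+ j <= \sum_(i < j.+1) q ^+ i.
    rewrite -[j.+1 in X in X <= _]card_ord -sum1_card natr_sum mulr_suml.
    apply: ler_sum => i _; rewrite mul1r.
    by apply: ler_wiXn2l => //; rewrite ?q0 ?ltW // -ltnS.
  move=> h; apply: (le_trans h).
  have e := subrX1 q j.+1.
  have hq1 : 0 < 1 - q by rewrite subr_gt0.
  rewrite -(ler_pM2l hq1) mulfV ?gt_eqF //.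
  have : (1 - q) * \sum_(i < j.+1) q ^+ i = 1 - q ^+ j.+1.
    by apply: (@oppr_inj _); rewrite -mulNr opprB -e opprB.
  move=> ->; rewrite lerBlDr lerDl exprn_ge0 //.
have sj : 0 < s ^+ j by rewrite exprn_gt0.
rewrite -(ler_pM2r sj) in hq.
apply: le_trans hq; rewrite -mulrA -exprMn /q divfK //; by rewrite gt_eqF.
Qed.

End Bounds.
Section L2.
Variable R : realType.
Local Open Scope complex_scope.

Lemma l2_geom (x : nat -> R[i]) (K q : R) : 0 <= q < 1 ->
  (forall n, cabs (x n) <= K * q ^+ n) -> l2 x.
Proof.
move=> /andP [q0 q1] hx.
have q20 : 0 <= q ^+ 2 by rewrite exprn_ge0.
have q21 : q ^+ 2 < 1 by rewrite expr_lt1.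
have hq1 : 0 < 1 - q ^+ 2 by rewrite subr_gt0.
rewrite /l2.
apply: (@le_lt_trans _ _ ((K ^+ 2 / (1 - q ^+ 2))%:E)); last by rewrite ltry.
apply: lime_le; first by apply: is_cvg_nneseries => *; rewrite lee_fin exprn_ge0 // cabs_ge0.
apply: nearW => N.
rewrite sumEFin lee_fin.
apply: (@le_trans _ _ (\sum_(0 <= i < N) K ^+ 2 * (q ^+ 2) ^+ i)).
  apply: ler_sum => i _.
  have h := hx i.
  rewrite -exprM mulnC exprM -exprMn.
  by rewrite lerXn2r ?nnegrE ?cabs_ge0 // (le_trans (cabs_ge0 _) h).
rewrite -mulr_sumr big_mkord.
have K2 : 0 <= K ^+ 2 by rewrite sqr_ge0.
rewrite ler_wpM2l //.
have e := subrX1 (q ^+ 2) N.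
rewrite -(ler_pM2l hq1) mulfV ?gt_eqF //.
have : (1 - q ^+ 2) * \sum_(i < N) (q ^+ 2) ^+ i = 1 - (q ^+ 2) ^+ N.
  by apply: (@oppr_inj _); rewrite -mulNr opprB -e opprB.
move=> ->; rewrite lerBlDr lerDl exprn_ge0 //.
Qed.

Lemma max_exists (x : nat -> R[i]) (K q : R) : 0 <= q < 1 ->
  (forall n, cabs (x n) <= K * q ^+ n) -> x 0%N != 0 ->
  exists i0, forall i, cabs (x i) <= cabs (x i0).
Proof.
move=> /andP [q0 q1] hx x0.
have c0 : 0 < cabs (x 0%N) by rewrite lt_neqAle eq_sym cabs_eq0 x0 cabs_ge0.
have K0 : 0 <= K by have := le_trans (cabs_ge0 _) (hx 0%N); rewrite expr0 mulr1.
have [N hN] : exists N, K * q ^+ N < cabs (x 0%N).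
  have Kp : 0 < K + 1 by rewrite ltr_wpDl.
  have := @cvg_expr _ q; rewrite ger0_norm // => /(_ q1).
  move/cvgrPdist_lt => /(_ (cabs (x 0%N) / (K + 1))).
  rewrite divr_gt0 // => /(_ isT) [M _ HM].
  exists M; have := HM M (leqnn M); rewrite sub0r normrN ger0_norm ?exprn_ge0 //.
  rewrite ltr_pdivlMr // => h.
  have qM : 0 <= q ^+ M by rewrite exprn_ge0.
  nra.
have [i0 [i0N Hi0]] : exists i0, (i0 <= N)%N /\ forall i, (i <= N)%N -> cabs (x i) <= cabs (x i0).
  elim: N {hN} => [|N [j [jN Hj]]].
    by exists 0%N; split => // i; rewrite leqn0 => /eqP ->.
  case: (leP (cabs (x N.+1)) (cabs (x j))) => h.
    exists j; split; first exact: leqW.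
    by move=> i; rewrite leq_eqVlt => /orP [/eqP -> // | ]; rewrite ltnS; exact: Hj.
  exists N.+1; split => // i; rewrite leq_eqVlt => /orP [/eqP -> // | ].
  by rewrite ltnS => /Hj h'; exact: le_trans h' (ltW h).
exists i0 => i; case: (leqP i N) => iN; first exact: Hi0.
have h1 : cabs (x i) <= K * q ^+ N.
  apply: (le_trans (hx i)); rewrite ler_wpM2l //.
  by apply: ler_wiXn2l => //; [exact: ltW | exact: ltnW].
apply: ltW; apply: (le_lt_trans h1); apply: (lt_le_trans hN); exact: Hi0.
Qed.

End L2.
Section Decay.
Variables (R : realType) (k : nat) (a b c : nat -> R[i]) (lam : R[i]).
Local Notation sol := (sol k a b c lam).
Local Open Scope complex_scope.

Lemma decay_block (mu1 mu2 : R[i]) (r : R) : (0 < k)%N -> 0 < r ->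
  cabs mu1 <= r -> cabs mu2 <= r ->
  trM k a b c lam = mu1 + mu2 -> detM k a b c lam = mu1 * mu2 ->
  exists Kmax : R, 0 <= Kmax /\
    forall N, cabs (sol 0 1 N) <= Kmax * (N %/ k)%N.+1%:R * r ^+ (N %/ k)%N.
Proof.
move=> k0 r0 h1 h2 ht hd.
set s := sol 0 1.
have CH := rec_CH k0 (sol_rec k a b c lam 0 1).
set F := fun n0 : nat => cabs (s n0) + cabs (s (n0 + k)%N - mu1 * s n0) / r.
have F0 : forall n0, 0 <= F n0.
  by move=> n0; rewrite /F addr_ge0 ?cabs_ge0 // divr_ge0 ?cabs_ge0 // ltW.
exists (\sum_(n0 < k) F n0); split; first by apply: sumr_ge0 => i _; exact: F0.
move=> N.
set j := (N %/ k)%N.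
set n0 := (N %% k)%N.
have n0k : (n0 < k)%N by rewrite ltn_mod.
have hN : N = (n0 + j * k)%N by rewrite addnC -divn_eq.
set y := fun j' => s (n0 + j' * k)%N.
have hy : forall j', y j'.+2 = (mu1 + mu2) * y j'.+1 - mu1 * mu2 * y j'.
  move=> j'; rewrite /y -ht -hd.
  have -> : (n0 + j'.+2 * k = (n0 + j' * k) + 2 * k)%N.
    by nia.
  have -> : (n0 + j'.+1 * k = (n0 + j' * k) + k)%N.
    by nia.
  exact: CH.
have B := rec2_bound r0 h1 h2 hy j.
have ey : y j = s N by rewrite /y -hN.
rewrite -ey; apply: (le_trans B).
have Fn : F n0 <= \sum_(n1 < k) F n1.
  by rewrite (bigD1 (Ordinal n0k)) //= lerDl sumr_ge0 // => i _; exact: F0.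
have -> : y 0%N = s n0 by rewrite /y mul0n addn0.
have -> : y 1%N = s (n0 + k)%N by rewrite /y mul1n.
have rj : 0 <= r ^+ j by rewrite exprn_ge0 // ltW.
rewrite [X in _ <= X]mulrC ler_wpM2l //.
set A := cabs (s n0); set Bv := cabs (s (n0 + k)%N - mu1 * s n0) / r.
have A0 : 0 <= A by exact: cabs_ge0.
have B0 : 0 <= Bv by rewrite divr_ge0 ?cabs_ge0 // ltW.
have hF : A + Bv <= \sum_(n1 < k) F n1 by exact: Fn.
have jj : 0 <= j%:R :> R by rewrite ler0n.
apply: (@le_trans _ _ ((A + Bv) * j.+1%:R)).
  rewrite -addn1 natrD mulrDr mulr1; nra.
by rewrite ler_wpM2r.
Qed.

End Decay.
Unset Implicit Arguments.
Set Strict Implicit.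
Theorem theorem2p9 (R : realType) (k : nat) (a b c : nat -> R[i]) (lam : R[i]) :
  (0 < k)%N ->
  \prod_(j < k) c j != 0 ->
  \prod_(j < k) b j != 0 ->
  ~ ess_spectrum (kToeplitz k a b c) lam ->
  (exists w : int, winding_number (char_curve k a b c lam) w /\ w < 0) ->
  exists Cst : R, 0 < Cst /\
    exists x : nat -> R[i],
      [/\ l2 x, x <> (fun _ => 0),
          (forall n, kToeplitz k a b c x n = lam * x n) &
          exists rho : R, (0 <= rho < 1) /\
            exists i0 : nat, (forall i, cabs (x i) <= cabs (x i0)) /\
              forall n : nat,
                cabs (x n) / cabs (x i0)
                <= Cst * ((n.+1 + k.-1) %/ k)%:R * rho ^+ ((n.+1 + k.-1) %/ k).-1].
Proof.
move=> k0 _ bnz' _ hw.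
have bnz : forall j, (j < k)%N -> b j != 0.
  by move=> j jk; move/prodf_neq0: bnz' => /(_ (Ordinal jk) isT).
set t := trM k a b c lam; set d := detM k a b c lam.
set sq := sqrtc (t ^+ 2 - 4 * d).
have two0 : (2 : R[i]) != 0 by rewrite pnatr_eq0.
set mu1 := (t + sq) / 2; set mu2 := (t - sq) / 2.
have sum12 : t = mu1 + mu2 by rewrite /mu1 /mu2; field.
have prod12 : d = mu1 * mu2.
  rewrite /mu1 /mu2; have e := sqr_sqrtc (t ^+ 2 - 4 * d); rewrite -/sq in e.
  transitivity ((t ^+ 2 - sq ^+ 2) / 4); first by rewrite e; field; rewrite ?pnatr_eq0 ?two0.
  by field.
have root_in : forall mu, mu ^+ 2 - t * mu + d = 0 -> cabs mu < 1.
  move=> mu hmu; have [->|mu0] := eqVneq mu 0.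
    by rewrite /cabs /= expr0n /= addr0 sqrtr0 ltr01.
  have [p [q [pq [h1 h2]]]] := eigvec hmu.
  have hsh := bloch_shift k0 h1 h2.
  have hdet := bloch_det k0 bnz mu0 pq hsh.
  have := root_outside k0 hw (invr_neq0 mu0) hdet.
  by rewrite cabsV invf_gt1 // lt_neqAle eq_sym cabs_eq0 mu0 cabs_ge0.
have r1 : cabs mu1 < 1 by apply: root_in; rewrite sum12 prod12; ring.
have r2 : cabs mu2 < 1 by apply: root_in; rewrite sum12 prod12; ring.
set rho0 := Num.max (cabs mu1) (cabs mu2).
have rho01 : rho0 < 1 by rewrite /rho0 gt_max r1 r2.
have rho00 : 0 <= rho0 by rewrite /rho0 le_max cabs_ge0.
set r := (1 + rho0) / 2.
have r0 : 0 < r by rewrite /r; lra.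
have rr1 : r < 1 by rewrite /r; lra.
have hm1 : cabs mu1 <= r.
  have h : cabs mu1 <= rho0 by rewrite /rho0 le_max lexx.
  rewrite /r; lra.
have hm2 : cabs mu2 <= r.
  have h : cabs mu2 <= rho0 by rewrite /rho0 le_max lexx orbT.
  rewrite /r; lra.
have [Kmax [Kmax0 hK]] := decay_block k0 r0 hm1 hm2 sum12 prod12.
set s := sol k a b c lam 0 1.
set x := fun n => s n.+1.
have x0 : x 0%N = 1 by [].
have eig : forall n, kToeplitz k a b c x n = lam * x n.
  move=> n; rewrite /kToeplitz /x.
  have bn := bnz _ (ltn_pmod n k0).
  have hr := sol_rec k a b c lam 0 1 n; rewrite -/s in hr.
  rewrite hr.
  case: n bn hr => [|n'] bn hr.
    by rewrite (_ : s 0%N = 0) //; field; rewrite ?bn.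
  have -> : ((n'.+1 + k.-1) %% k = n' %% k)%N.
    by rewrite addSn -addnS prednK // modnDr.
  by field; rewrite ?bn.
have rsg : r < (1 + r) / 2 by lra.
have [C [C0 hC]] := lin_geom (ltW r0) rsg.
set sg := (1 + r) / 2 in rsg hC.
have kR : 0 < k%:R :> R by rewrite ltr0n.
set th := 1 - (1 - sg) / k%:R.
have e01 : 0 <= (1 - sg) / k%:R <= 1.
  apply/andP; split; first by rewrite divr_ge0 ?ltW // /sg; lra.
  rewrite ler_pdivrMr // mul1r; apply: le_trans (_ : 1 <= k%:R); first by rewrite /sg; lra.
  by rewrite ler1n.
have thk : sg <= th ^+ k.
  have := bernoulli k e01; rewrite mulrCA mulfV ?gt_eqF // mulr1 /th.
  by rewrite opprB addrCA subrr addr0.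
have th1 : th < 1.
  rewrite /th ltrBlDr ltrDl divr_gt0 //; rewrite /sg; lra.
have th0 : 0 < th.
  have sg0 : 0 < sg by rewrite /sg; lra.
  have h1s : 0 <= 1 - sg by rewrite /sg; lra.
  have : (1 - sg) / k%:R <= 1 - sg.
    rewrite ler_pdivrMr // ler_peMr // ler1n //.
  rewrite /th; lra.
have hs : forall N, cabs (s N) <= (Kmax * C / th ^+ k) * th ^+ N.
  move=> N; set j := (N %/ k)%N.
  apply: (le_trans (hK N)); rewrite -/j.
  have rj := hC j.
  have s1 : sg ^+ j <= th ^+ (j * k).
    by rewrite mulnC exprM lerXn2r // nnegrE ?exprn_ge0 ?ltW // /sg; lra.
  have s2 : th ^+ (j * k) * th ^+ k <= th ^+ N.
    rewrite -exprD; apply: ler_wiXn2l; [exact: ltW | exact: ltW |].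
    by have := ltn_ceil N k0; rewrite -/j mulSn addnC => /ltnW.
  have thk0 : 0 < th ^+ k by rewrite exprn_gt0.
  have s3 : th ^+ (j * k) <= th ^+ N / th ^+ k by rewrite ler_pdivlMr.
  apply: (@le_trans _ _ (Kmax * (C * sg ^+ j))); first by rewrite -mulrA ler_wpM2l.
  rewrite -!mulrA ler_wpM2l // ler_wpM2l // mulrC; exact: le_trans s1 s3.
set K' := Kmax * C / th ^+ k.
have K'0 : 0 <= K' by rewrite /K' divr_ge0 ?mulr_ge0 ?exprn_ge0 // ltW.
have hx : forall n, cabs (x n) <= K' * th ^+ n.
  move=> n; apply: (le_trans (hs n.+1)); rewrite ler_wpM2l //.
  by apply: ler_wiXn2l => //; exact: ltW.
have thI : 0 <= th < 1 by rewrite (ltW th0) th1.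
have xn0 : x 0%N != 0 by rewrite x0 oner_eq0.
have [i0 Hi0] := max_exists thI hx xn0.
have ci0 : 0 < cabs (x i0).
  apply: (lt_le_trans _ (Hi0 0%N)); rewrite x0 /cabs /= expr0n /= addr0 expr1n sqrtr1.
  exact: ltr01.
set Cst := 2 * Kmax / cabs (x i0) + 1.
have Cst0 : 0 < Cst by rewrite /Cst ltr_wpDl // divr_ge0 ?mulr_ge0 // ltW.
exists Cst; split => //.
exists x; split.
- exact: l2_geom thI hx.
- by move=> h; have := congr1 (fun f => f 0%N) h; rewrite /= x0 => /eqP; rewrite oner_eq0.
- exact: eig.
exists r; split; first by rewrite (ltW r0) rr1.
exists i0; split => // n.
set m := ((n.+1 + k.-1) %/ k)%N.
set j := (n.+1 %/ k)%N.
have hb := hK n.+1; rewrite -/j in hb.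
have jm : (j <= m)%N by rewrite leq_div2r // leq_addr.
have mj : (m <= j.+1)%N.
  have := leq_divDl k n.+1 k.-1; rewrite (divn_small (_ : k.-1 < k)%N) ?ltn_predL //.
  by rewrite addn0 addn1.
have m1 : (0 < m)%N by rewrite divn_gt0 // addSnnS prednK // leq_addl.
have rj : r ^+ j <= r ^+ m.-1.
  by apply: ler_wiXn2l; [exact: ltW | exact: ltW | rewrite -ltnS prednK].
have jm2 : j.+1%:R <= 2 * m%:R :> R.
  by rewrite -natrM ler_nat -addn1 mul2n -addnn leq_add.
have K0 := Kmax0.
have rm0 : 0 <= r ^+ m.-1 by rewrite exprn_ge0 // ltW.
have rj0 : 0 <= r ^+ j by rewrite exprn_ge0 // ltW.
rewrite ler_pdivrMr //.
apply: (le_trans hb).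
have m0 : 0 <= m%:R :> R by rewrite ler0n.
have j0 : 0 <= j.+1%:R :> R by rewrite ler0n.
have step : Kmax * j.+1%:R * r ^+ j <= 2 * Kmax * m%:R * r ^+ m.-1.
  rewrite -(mulrA 2) (mulrC 2) -!mulrA ler_wpM2l //.
  rewrite mulrA (mulrC m%:R); exact: ler_pM.
apply: (le_trans step).
have E : Cst * m%:R * r ^+ m.-1 * cabs (x i0) = (2 * Kmax + cabs (x i0)) * (m%:R * r ^+ m.-1).
  by rewrite /Cst; field; rewrite gt_eqF.
rewrite E -mulrA ler_wpM2r ?mulr_ge0 //.
by rewrite lerDl ltW.
Qed.
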